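(* Let $R$ be a commutative noetherian ring, let $\mathfrak a$ be an ideal of $R$, let $\mathcal S_1$ be a Serre subcategory of $R$-modules and let $\mathcal S_2$ be any subcategory of $R$-modules containing the zero module. If $\mathcal S_1\mathcal S_2$ is closed under extensions and $(\mathcal S_2\mathcal S_1)_{\mathfrak a}$ is closed under quotients, then $(\mathcal S_2\mathcal S_1)_{\mathfrak a}\subseteq(\mathcal S_1\mathcal S_2)_{\mathfrak a}$. In particular, if $\mathcal S_2\mathcal S_1$ satisfies the condition $C_{\mathfrak a}$, then so does $\mathcal S_1\mathcal S_2$.
   Context: A Serre subcategory is a full subcategory of $R$-modules closed under submodules, quotients and extensions. For subcategories $\mathcal S,\mathcal T$, the extension subcategory $\mathcal S\mathcal T$ consists of all modules $M$ admitting an exact sequence $0\to L\to M\to N\to 0$ with $L\in\mathcal S$, $N\in\mathcal T$; $\mathcal S$ is closed under extensions if $\mathcal S\mathcal S=\mathcal S$. For a subcategory $\mathcal S$ and module $M$, $\mathcal S$ satisfies the condition $C_{\mathfrak a}$ on $M$ if: $\Gamma_{\mathfrak a}(M)=M$ and $(0:_M\mathfrak a)\in\mathcal S$ imply $M\in\mathcal S$. $\mathcal S_{\mathfrak a}$ denotes the largest subcategory of modules on all of whose objects $\mathcal S$ satisfies the condition $C_{\mathfrak a}$ (i.e. the class of all modules $M$ on which $\mathcal S$ satisfies $C_{\mathfrak a}$). $\mathcal S$ satisfies the condition $C_{\mathfrak a}$ if $\mathcal S_{\mathfrak a}$ is the whole category of $R$-modules. *)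

(* Defs.v *)
From HB Require Import structures.
From mathcomp Require Import all_boot all_algebra.
Set Implicit Arguments. Unset Strict Implicit. Unset Printing Implicit Defensive.
Import GRing.Theory.
Local Open Scope ring_scope.

(* R-modules are modeled as [lmodType R] for a commutative ring R.
   A "subcategory" of R-modules is a predicate on modules. *)
Definition modclass (R : comPzRingType) := lmodType R -> Prop.

Section Defs.
Variable R : comPzRingType.

Definition is_ideal (a : R -> Prop) : Prop :=
  [/\ a 0, (forall x y, a x -> a y -> a (x + y)) & (forall r x, a x -> a (r * x))].

Definition noetherian_ring : Prop :=
  forall I : nat -> R -> Prop, (forall n, is_ideal (I n)) ->
    (forall n x, I n x -> I n.+1 x) ->
    exists N, forall n, (N <= n)%N -> forall x, I n x -> I N x.

(* closed under isomorphisms (standing convention for subcategories) *)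
Definition iso_closed (S : modclass R) : Prop :=
  forall (M N : lmodType R) (f : {linear M -> N}), bijective f -> S M -> S N.

Definition closed_sub (S : modclass R) : Prop :=
  forall (M N : lmodType R) (f : {linear N -> M}), injective f -> S M -> S N.

Definition closed_quot (S : modclass R) : Prop :=
  forall (M N : lmodType R) (f : {linear M -> N}), (forall y, exists x, f x = y) -> S M -> S N.

Definition short_exact (L M N : lmodType R) (f : {linear L -> M}) (g : {linear M -> N}) : Prop :=
  [/\ injective f, (forall n, exists m, g m = n) & forall m, g m = 0 <-> exists l, f l = m].

Definition ext_class (S T : modclass R) : modclass R := fun M =>
  exists (L N : lmodType R) (f : {linear L -> M}) (g : {linear M -> N}),
    [/\ short_exact f g, S L & T N].

Definition ext_closed (S : modclass R) : Prop :=
  forall M, ext_class S S M <-> S M.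

Definition serre (S : modclass R) : Prop :=
  [/\ closed_sub S, closed_quot S & ext_closed S].

Definition contains_zero (S : modclass R) : Prop :=
  exists Z : lmodType R, (forall z : Z, z = 0) /\ S Z.

Definition ann_pow (a : R -> Prop) (M : lmodType R) (n : nat) (m : M) : Prop :=
  forall s : n.-tuple R, (forall x, x \in s -> a x) -> (\prod_(x <- s) x) *: m = 0.

Definition a_torsion (a : R -> Prop) (M : lmodType R) : Prop :=
  forall m : M, exists n, ann_pow a n m.

(* (0 :_M a) belongs to S: it is (the image of) a module in S via an
   injective linear map onto the submodule {m | a m = 0}. *)
Definition socle_in (a : R -> Prop) (S : modclass R) (M : lmodType R) : Prop :=
  exists (N : lmodType R) (i : {linear N -> M}),
    [/\ injective i, (forall m, (exists n, i n = m) <-> (forall x, a x -> x *: m = 0)) & S N].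

Definition Ca_class (a : R -> Prop) (S : modclass R) : modclass R := fun M =>
  a_torsion a M -> socle_in a S M -> S M.

Definition satisfies_Ca (a : R -> Prop) (S : modclass R) : Prop :=
  forall M, Ca_class a S M.
End Defs.

(* Main.v *)
Require Import Defs.
From HB Require Import structures.
From mathcomp Require Import all_boot all_algebra.
From Stdlib Require Import ClassicalEpsilon Classical PropExtensionality FunctionalExtensionality.
Set Implicit Arguments. Unset Strict Implicit. Unset Printing Implicit Defensive.
Import GRing.Theory.
Local Open Scope ring_scope.

Definition pb (P : Prop) : bool := if excluded_middle_informative P then true else false.
Lemma pbP P : reflect P (pb P).
Proof. rewrite /pb; case: excluded_middle_informative => h; constructor; done. Qed.

Definition submod (R : comPzRingType) (V : lmodType R) (P : V -> Prop) :=
  P 0 /\ forall r x y, P x -> P y -> P (r *: x + y).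

Section Closure.
Variables (R : comPzRingType) (V : lmodType R) (P : V -> Prop) (hP : submod P).
Lemma sm0 : P 0. Proof. by case: hP. Qed.
Lemma smD x y : P x -> P y -> P (x + y).
Proof. by move=> a b; have := (proj2 hP) 1 x y a b; rewrite scale1r. Qed.
Lemma smZ r x : P x -> P (r *: x).
Proof. by move=> a; have := (proj2 hP) r x 0 a sm0; rewrite addr0. Qed.
Lemma smN x : P x -> P (- x).
Proof. by move=> a; rewrite -scaleN1r; apply: smZ. Qed.
Lemma smB x y : P x -> P y -> P (x - y).
Proof. by move=> a b; apply: smD => //; apply: smN. Qed.
End Closure.

Section SQ.
Variables (R : comPzRingType) (V : lmodType R) (U W : V -> Prop).
Definition SQhyp := submod U /\ submod W /\ forall x, W x -> U x.
Variable hh : SQhyp.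
Let hU : submod U := proj1 hh.
Let hW : submod W := proj1 (proj2 hh).
Let hWU : forall x, W x -> U x := proj2 (proj2 hh).

Definition canon (v : V) : V := epsilon (inhabits 0) (fun u => W (u - v)).
Definition rU (v : V) : V := if pb (U v) then v else 0.
Definition SQok (v : V) : bool := pb (U v) && (canon v == v).
Definition SQt of SQhyp := {v : V | SQok v}.
Local Notation SQ := (SQt hh).
HB.instance Definition _ := Choice.copy SQ {v : V | SQok v}.

Lemma canonW x : W (canon x - x).
Proof.
rewrite /canon; apply: (epsilon_spec (inhabits 0) (fun u => W (u - x))).
by exists x; rewrite subrr; apply: sm0.
Qed.

Lemma canon_eq x y : W (x - y) -> canon x = canon y.
Proof.
move=> h; rewrite /canon; congr epsilon; apply: functional_extensionality => u.
apply: propositional_extensionality; split => h'.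
  by have := smD hW h' h; rewrite addrA subrK.
by have := smB hW h' h; rewrite opprB addrA subrK.
Qed.

Lemma U_rU v : U (rU v).
Proof. by rewrite /rU; case: pbP => // _; apply: sm0. Qed.

Lemma U_canon x : U x -> U (canon x).
Proof. by move=> h; rewrite -(subrK x (canon x)); apply: smD => //; apply: hWU; apply: canonW. Qed.

Lemma canon_idem x : canon (canon x) = canon x.
Proof. by apply: canon_eq; apply: canonW. Qed.

Lemma okpi v : SQok (canon (rU v)).
Proof. by rewrite /SQok canon_idem eqxx andbT; apply/pbP; apply: U_canon; apply: U_rU. Qed.

Definition sqpi v : SQ := exist _ (canon (rU v)) (okpi v).

Lemma U_val (q : SQ) : U (val q).
Proof. by case: q => v /= /andP [/pbP]. Qed.

Lemma canon_val (q : SQ) : canon (val q) = val q.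
Proof. by case: q => v /= /andP [_ /eqP]. Qed.

Lemma rU_U x : U x -> rU x = x.
Proof. by rewrite /rU; case: pbP. Qed.

Lemma piK q : sqpi (val q) = q.
Proof. by apply: val_inj; rewrite /= rU_U ?canon_val //; apply: U_val. Qed.

Definition eqm x y := W (x - y).
Lemma eqm_refl x : eqm x x. Proof. by rewrite /eqm subrr; apply: sm0. Qed.
Lemma eqm_sym x y : eqm x y -> eqm y x.
Proof. by rewrite /eqm => h; rewrite -opprB; apply: smN. Qed.
Lemma eqm_trans y x z : eqm x y -> eqm y z -> eqm x z.
Proof. by rewrite /eqm => h h'; have := smD hW h h'; rewrite addrA subrK. Qed.
Lemma eqm_add x x' y y' : eqm x x' -> eqm y y' -> eqm (x + y) (x' + y').
Proof.
rewrite /eqm => h h'; have := smD hW h h'.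
suff -> : x + y - (x' + y') = x - x' + (y - y') by [].
by rewrite opprD addrACA.
Qed.
Lemma eqm_scale r x x' : eqm x x' -> eqm (r *: x) (r *: x').
Proof. by rewrite /eqm => h; rewrite -scalerBr; apply: smZ. Qed.
Lemma eqm_opp x x' : eqm x x' -> eqm (- x) (- x').
Proof. by rewrite /eqm => h; rewrite -opprD; apply: smN. Qed.
Lemma eqm_pi x : U x -> eqm (val (sqpi x)) x.
Proof. by move=> h; rewrite /eqm /= rU_U //; apply: canonW. Qed.

Lemma pi_eq x y : U x -> U y -> (sqpi x = sqpi y <-> eqm x y).
Proof.
move=> hx hy; split.
  move=> e; apply: (eqm_trans (eqm_sym (eqm_pi hx))); rewrite e; exact: eqm_pi.
by move=> e; apply: val_inj; rewrite /= !rU_U //; apply: canon_eq.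
Qed.


Definition sq0 : SQ := sqpi 0.
Definition sqadd (p q : SQ) : SQ := sqpi (val p + val q).
Definition sqopp (q : SQ) : SQ := sqpi (- val q).
Definition sqscale (r : R) (q : SQ) : SQ := sqpi (r *: val q).

Ltac Ut := repeat first [ assumption | apply: U_val | apply: U_canon | apply: U_rU
  | apply: (smD hU) | apply: (smZ hU) | apply: (smN hU) | apply: (sm0 hU)].
Ltac Et := repeat first [ apply: eqm_refl | apply: eqm_add | apply: eqm_scale | apply: eqm_opp
  | (apply: eqm_pi; Ut) ].

Lemma sqaddA : associative sqadd.
Proof.
move=> a b c; rewrite /sqadd; apply/pi_eq; Ut.
apply: (@eqm_trans (val a + (val b + val c))); first by Et.
rewrite addrA; apply: eqm_sym; Et.
Qed.
Lemma sqaddC : commutative sqadd.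
Proof. by move=> a b; rewrite /sqadd addrC. Qed.
Lemma sqadd0 : left_id sq0 sqadd.
Proof.
move=> a; rewrite /sqadd -[RHS]piK; apply/pi_eq; Ut.
apply: (@eqm_trans (0 + val a)); first by Et.
rewrite add0r; exact: eqm_refl.
Qed.
Lemma sqaddN : left_inverse sq0 sqopp sqadd.
Proof.
move=> a; rewrite /sqadd /sq0; apply/pi_eq; Ut.
apply: (@eqm_trans (- val a + val a)); first by Et.
rewrite addNr; exact: eqm_refl.
Qed.
HB.instance Definition _ := GRing.isZmodule.Build SQ sqaddA sqaddC sqadd0 sqaddN.

Lemma sqscaleA a b v : sqscale a (sqscale b v) = sqscale (a * b) v.
Proof.
rewrite /sqscale; apply/pi_eq; Ut.
apply: (@eqm_trans (a *: (b *: val v))); first by Et.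
rewrite scalerA; exact: eqm_refl.
Qed.
Lemma sqscale1 : left_id 1 sqscale.
Proof. by move=> v; rewrite /sqscale scale1r piK. Qed.
Lemma sqscaleDr : right_distributive sqscale +%R.
Proof.
move=> r a b; rewrite /sqscale /= /sqadd; apply/pi_eq; Ut.
apply: (@eqm_trans (r *: (val a + val b))); first by Et.
rewrite scalerDr; apply: eqm_sym; Et.
Qed.
Lemma sqscaleDl v : {morph sqscale^~ v: a b / a + b}.
Proof.
move=> a b; rewrite /sqscale /= /sqadd; apply/pi_eq; Ut.
rewrite scalerDl; apply: eqm_sym; Et.
Qed.
HB.instance Definition _ := GRing.Zmodule_isLmodule.Build R SQ sqscaleA sqscale1 sqscaleDr sqscaleDl.

Lemma sq_addE (p q : SQ) : p + q = sqpi (val p + val q). Proof. by []. Qed.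
Lemma sq_scaleE r (q : SQ) : r *: q = sqpi (r *: val q). Proof. by []. Qed.
Lemma sq_zeroE : (0 : SQ) = sqpi 0. Proof. by []. Qed.

Lemma pi_lin r x y : U x -> U y -> sqpi (r *: x + y) = r *: sqpi x + sqpi y.
Proof.
move=> hx hy; rewrite sq_addE sq_scaleE; apply/pi_eq; Ut.
apply: eqm_sym; apply: (@eqm_trans (r *: x + y)); Et.
apply: (@eqm_trans (r *: val (sqpi x))); Et.
Qed.

Lemma pi0W x : U x -> (sqpi x = 0 <-> W x).
Proof.
move=> hx; rewrite sq_zeroE pi_eq //; last exact: (sm0 hU).
by rewrite /eqm subr0.
Qed.

Lemma sq_eq0 (q : SQ) : q = 0 <-> W (val q).
Proof. by rewrite -{1}(piK q); apply: pi0W; apply: U_val. Qed.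

Definition lin_on (T : lmodType R) (f : V -> T) :=
  forall r x y, U x -> U y -> f (r *: x + y) = r *: f x + f y.

Lemma lift_lin (T : lmodType R) (f : V -> T) : lin_on f -> (forall w, W w -> f w = 0) ->
  linear (fun q : SQ => f (val q)).
Proof.
move=> hf hk r p q.
have e : forall x, U x -> f (val (sqpi x)) = f x.
  move=> x hx; have h := eqm_pi hx; rewrite /eqm in h.
  transitivity (f (1 *: (val (sqpi x) - x) + x)); first by rewrite scale1r subrK.
  rewrite hf //; last exact: hWU.
  by rewrite (hk _ h) scaler0 add0r.
have f0 : f 0 = 0.
  have := hf 1 0 0 (sm0 hU) (sm0 hU); rewrite !scale1r addr0 => h.
  by apply: (addrI (f 0)); rewrite addr0 -h.
have fadd : forall x y, U x -> U y -> f (x + y) = f x + f y.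
  by move=> x y hx hy; have := hf 1 x y hx hy; rewrite !scale1r.
have fsc : forall s x, U x -> f (s *: x) = s *: f x.
  by move=> s x hx; rewrite -[s *: x]addr0 hf ?f0 ?addr0 //; exact: sm0.
rewrite sq_addE sq_scaleE e; last by Ut.
rewrite fadd; [|Ut|Ut]. rewrite e; last by Ut.
by rewrite fsc //; Ut.
Qed.

End SQ.


Definition mkLin (R : comPzRingType) (A B : lmodType R) (f : A -> B) (h : linear f) : {linear A -> B} :=
  HB.pack f (GRing.isLinear.Build _ _ _ _ f h).
Lemma mkLinE R A B f h x : @mkLin R A B f h x = f x. Proof. by []. Qed.

Lemma lin0 (R : comPzRingType) (A B : lmodType R) : linear (fun _ : A => (0 : B)).
Proof. by move=> r x y; rewrite scaler0 addr0. Qed.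
Lemma linid (R : comPzRingType) (A : lmodType R) : linear (fun x : A => x).
Proof. by []. Qed.
Definition zlin R A B := @mkLin R A B _ (@lin0 R A B).
Definition idlin R A := @mkLin R A A _ (@linid R A).

Section Gens.
Variable R : comPzRingType.
Fixpoint spanL (s : seq R) (x : R) : Prop :=
  match s with [::] => x = 0 | g :: s' => exists r y, spanL s' y /\ x = r * g + y end.

Lemma span_ideal s : is_ideal (spanL s).
Proof.
elim: s => [|g s [h0 hD hM]] /=.
  by split => [//|x y -> ->|r x ->]; rewrite ?addr0 ?mulr0.
split.
- by exists 0, 0; rewrite mul0r addr0.
- move=> x y [r [u [hu ->]]] [r' [u' [hu' ->]]].
  exists (r + r'), (u + u'); split; first exact: hD.
  by rewrite mulrDl addrACA.
- move=> c x [r [u [hu ->]]]; exists (c * r), (c * u); split; first exact: hM.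
  by rewrite mulrDr mulrA.
Qed.

Lemma span_mono g s x : spanL s x -> spanL (g :: s) x.
Proof. by move=> h; exists 0, x; rewrite mul0r add0r. Qed.

Lemma span_ann (V : lmodType R) (m : V) s x :
  (forall g, g \in s -> g *: m = 0) -> spanL s x -> x *: m = 0.
Proof.
elim: s x => [|g s IH] x /= hg.
  by move=> ->; rewrite scale0r.
move=> [r [y [hy ->]]]; rewrite scalerDl -scalerA hg ?mem_head // scaler0 add0r.
by apply: IH hy => g' hg'; apply: hg; rewrite in_cons hg' orbT.
Qed.

Variable a : R -> Prop.
Definition nextg (s : seq R) : R :=
  epsilon (inhabits 0) (fun x => a x /\ (~ spanL s x \/ forall y, a y -> spanL s y)).
Lemma nextP s : is_ideal a -> a (nextg s) /\ (~ spanL s (nextg s) \/ forall y, a y -> spanL s y).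
Proof.
move=> [a0 _ _]; rewrite /nextg.
apply: (epsilon_spec (inhabits 0) (fun x => a x /\ (~ spanL s x \/ forall y, a y -> spanL s y))).
case: (classic (forall y, a y -> spanL s y)) => h.
  by exists 0; split => //; right.
have [y hy] := not_all_ex_not _ _ h.
have [ay ny] := imply_to_and _ _ hy.
by exists y; split => //; left.
Qed.
Fixpoint xs n := match n with 0 => [::] | n.+1 => nextg (xs n) :: xs n end.

Lemma gens : noetherian_ring R -> is_ideal a ->
  exists s, (forall g, g \in s -> a g) /\ forall x, a x -> spanL s x.
Proof.
move=> hN ha.
have [N hNn] := hN (fun n => spanL (xs n)) (fun n => span_ideal _) (fun n x h => span_mono _ h).
have hin : forall n g, g \in xs n -> a g.
  elim=> [//|n IH] g /=; rewrite in_cons => /orP [/eqP ->|]; last exact: IH.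
  exact: (proj1 (nextP _ ha)).
exists (xs N); split; first exact: hin.
have h1 : spanL (xs N.+1) (nextg (xs N)).
  exists 1, 0; split; first by case: (span_ideal (xs N)).
  by rewrite mul1r addr0.
have := hNn N.+1 (leqnSn N) _ h1.
by case: (proj2 (nextP (xs N) ha)).
Qed.
End Gens.

Section Sub21.
Variables (R : comPzRingType) (S1 S2 : modclass R).
Hypotheses (hS1 : serre S1) (hZ : contains_zero S2) (hE : ext_closed (ext_class S1 S2)).

Lemma S1_S12 (Y : lmodType R) : S1 Y -> ext_class S1 S2 Y.
Proof.
move=> hY; have [Z [hz SZ]] := hZ.
exists Y, Z, (idlin Y), (zlin Y Z); split => //.
split => [x y //|n|m]; first by exists 0; rewrite (hz n); apply: hz.
by split => [_|_]; [exists m | apply: hz].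
Qed.

Lemma S2_S12 (X : lmodType R) : (exists Y, S1 Y) -> S2 X -> ext_class S1 S2 X.
Proof.
move=> [Y hY] hX; have [Z [hz SZ]] := hZ.
have S1Z : S1 Z.
  case: hS1 => hsub _ _; apply: (hsub Y Z (zlin Z Y)) => // x y _; by rewrite (hz x) (hz y).
exists Z, X, (zlin Z X), (idlin X); split => //.
split => [x y _|n|m]; first by rewrite (hz x) (hz y).
  by exists n.
split => [h|[l <-]] //; exists 0; exact: (esym h).
Qed.

Lemma sub21 M : ext_class S2 S1 M -> ext_class S1 S2 M.
Proof.
move=> [X [Y [f [g [ex hX hY]]]]].
apply/(proj1 (hE M)); exists X, Y, f, g; split => //.
  by apply: S2_S12 => //; exists Y.
exact: S1_S12.
Qed.
End Sub21.
Section PW.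
Variables (R : comPzRingType) (S1 : modclass R) (hS1 : serre S1) (L : lmodType R) (SL : S1 L).
Fixpoint PW (s : seq R) : lmodType R :=
  match s with [::] => L | _ :: s' => (L * PW s')%type end.

Lemma S1_PW s : S1 (PW s).
Proof.
elim: s => [//|g s IH] /=.
have [_ _ hext] := hS1.
apply/(proj1 (hext _)).
have l1 : linear (fun l : L => (l, 0 : PW s)).
  move=> r x y; change ((r *: x + y, 0) = (r *: x + y, r *: (0 : PW s) + 0)).
  by rewrite scaler0 addr0.
have l2 : linear (fun p : (L * PW s)%type => p.2) by [].
exists L, (PW s), (mkLin l1), (mkLin l2); split => //; split.
- by move=> x y [].
- by move=> n; exists (0, n).
- move=> [x y]; rewrite !mkLinE /=; split => [->|[l e]]; first by exists x.
  by case: e => _ <-.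
Qed.
End PW.

Section Main.
Variables (R : comPzRingType) (a : R -> Prop) (S1 S2 : modclass R).
Hypotheses (hN : noetherian_ring R) (ha : is_ideal a) (hS1 : serre S1)
  (hZ : contains_zero S2) (hE : ext_closed (ext_class S1 S2))
  (hQ : closed_quot (Ca_class a (ext_class S2 S1))).
Variable M : lmodType R.
Hypotheses (HCa : Ca_class a (ext_class S2 S1) M) (Htor : a_torsion a M).
Variables (Ns : lmodType R) (i : {linear Ns -> M}).
Hypotheses (hi : injective i)
  (hichar : forall m, (exists n, i n = m) <-> (forall x, a x -> x *: m = 0)).
Variables (L N : lmodType R) (f0 : {linear L -> Ns}) (g0 : {linear Ns -> N}).
Hypotheses (hex : short_exact f0 g0) (SL : S1 L) (SN : S2 N).

Definition j (l : L) : M := i (f0 l).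
Lemma j_lin : linear j. Proof. by move=> r x y; rewrite /j !linearP. Qed.
Lemma hj : injective j.
Proof. by case: hex => hf _ _ x y /hi /hf. Qed.
Definition Lt (m : M) := exists l, j l = m.
Definition Soc (m : M) := forall x, a x -> x *: m = 0.
Definition Uc (m : M) := forall x, a x -> Lt (x *: m).
Definition Tt (m : M) := True.

Lemma Lt_sm : submod Lt.
Proof.
split; first by exists 0; rewrite /j !linear0.
move=> r x y [l <-] [l' <-]; exists (r *: l + l'); exact: j_lin.
Qed.
Lemma Soc_sm : submod Soc.
Proof.
split; first by move=> x _; rewrite scaler0.
move=> r x y hx hy z az; rewrite scalerDr scalerA mulrC -scalerA hx // hy //.
by rewrite scaler0 addr0.
Qed.
Lemma Uc_sm : submod Uc.
Proof.
split; first by move=> x _; rewrite scaler0; exact: (sm0 Lt_sm).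
move=> r x y hx hy z az; rewrite scalerDr scalerA mulrC -scalerA.
by apply: (proj2 Lt_sm); [apply: hx | apply: hy].
Qed.
Lemma Tt_sm : submod Tt. Proof. by []. Qed.
Lemma Lt_Soc m : Lt m -> Soc m.
Proof. by move=> [l <-]; apply/hichar; exists (f0 l). Qed.
Lemma Soc_Uc m : Soc m -> Uc m.
Proof. by move=> h x ax; rewrite h //; exact: (sm0 Lt_sm). Qed.

Definition hM' : SQhyp Tt Lt := conj Tt_sm (conj Lt_sm (fun _ _ => I)).
Definition hK : SQhyp Uc Lt := conj Uc_sm (conj Lt_sm (fun x h => Soc_Uc (Lt_Soc h))).
Definition hY : SQhyp Uc Soc := conj Uc_sm (conj Soc_sm Soc_Uc).
Definition M' := SQt hM'.
Definition K := SQt hK.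
Definition Y := SQt hY.

Lemma piM_lin : linear (sqpi hM').
Proof. by move=> r x y; apply: pi_lin. Qed.
Definition piML : {linear M -> M'} := mkLin piM_lin.

Definition iota_f (k : K) : M' := sqpi hM' (val k).
Lemma iota_lin : linear iota_f.
Proof.
apply: (@lift_lin _ _ _ _ hK _ (sqpi hM')).
  by move=> r x y _ _; apply: pi_lin.
by move=> w hw; apply/(pi0W hM').
Qed.
Definition iotaL := mkLin iota_lin.


Lemma iota_inj : injective iotaL.
Proof.
move=> k k'; rewrite !mkLinE /iota_f => /(pi_eq hM' I I) e.
by rewrite -(piK hK k) -(piK hK k'); apply/(pi_eq hK); [apply: U_val|apply: U_val|].
Qed.

Lemma sqpiM_scale r m : r *: sqpi hM' m = sqpi hM' (r *: m).
Proof. by have := piM_lin r m 0; rewrite -(@sq_zeroE _ _ _ _ hM') !addr0 => <-. Qed.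

Lemma iota_char (q : M') : (exists k, iotaL k = q) <-> (forall x, a x -> x *: q = 0).
Proof.
split.
  move=> [k <-] x ax; rewrite mkLinE /iota_f sqpiM_scale; apply/(pi0W hM' I).
  exact: (U_val k) x ax.
move=> h; set m := val q.
have hUm : Uc m.
  move=> x ax; have := h x ax; rewrite -(piK hM' q) sqpiM_scale => /(pi0W hM' I); done.
exists (sqpi hK m); rewrite mkLinE /iota_f -(piK hM' q); apply/(pi_eq hM' I I).
exact: (eqm_pi hK hUm).
Qed.

Lemma hex1 : injective f0. Proof. by case: hex. Qed.
Lemma hex2 n : exists m, g0 m = n. Proof. by case: hex. Qed.
Lemma hex3 m : g0 m = 0 <-> exists l, f0 l = m. Proof. by case: hex. Qed.

Definition lift (n : N) : Ns := epsilon (inhabits 0) (fun s => g0 s = n).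
Lemma liftK n : g0 (lift n) = n.
Proof. exact: (epsilon_spec (inhabits 0) (fun s => g0 s = n) (hex2 n)). Qed.

Lemma i_Soc s : Soc (i s). Proof. by apply/hichar; exists s. Qed.
Lemma i_Uc s : Uc (i s). Proof. exact: Soc_Uc (i_Soc s). Qed.

Lemma Lt_ker s : g0 s = 0 -> Lt (i s).
Proof. by move=> /hex3 [l <-]; exists l. Qed.

Definition hfun (n : N) : K := sqpi hK (i (lift n)).
Lemma hfun_lin : linear hfun.
Proof.
move=> r n n'; rewrite /hfun -pi_lin; [|exact: i_Uc|exact: i_Uc].
apply/(pi_eq hK); [exact: i_Uc | apply: (proj2 Uc_sm); exact: i_Uc|].
rewrite /eqm -!linearP -linearB; apply: Lt_ker.
by rewrite linearB linearP /= !liftK subrr.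
Qed.
Definition hL := mkLin hfun_lin.

Definition Ff (k : K) : Y := sqpi hY (val k).
Lemma Ff_lin : linear Ff.
Proof.
apply: (@lift_lin _ _ _ _ hK _ (sqpi hY)).
  by move=> r x y hx hy; apply: pi_lin.
move=> w hw; apply/(pi0W hY); [exact: Soc_Uc (Lt_Soc hw)| exact: Lt_Soc].
Qed.
Definition FL := mkLin Ff_lin.

Lemma hL_inj : injective hL.
Proof.
move=> n n'; rewrite !mkLinE /hfun => /(pi_eq hK (i_Uc _) (i_Uc _)).
rewrite /eqm -linearB => [[l]]; rewrite /j => /hi e.
have := proj2 (hex3 (f0 l)) (ex_intro _ l erefl).
by rewrite e linearB /= !liftK => /eqP; rewrite subr_eq0 => /eqP.
Qed.

Lemma FL_surj y : exists k, FL k = y.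
Proof.
exists (sqpi hK (val y)); rewrite mkLinE /Ff -[RHS](piK hY y).
apply/(pi_eq hY); [apply: U_val; exact: hK | apply: U_val|].
apply: Lt_Soc; apply: (eqm_pi hK); exact: U_val.
Qed.

Lemma FL_ker k : FL k = 0 <-> exists n, hL n = k.
Proof.
rewrite mkLinE /Ff (pi0W hY (U_val k)); split.
  move=> /hichar [s e]; exists (g0 s); rewrite mkLinE /hfun -[RHS](piK hK k).
  apply/(pi_eq hK (i_Uc _) (U_val k)); rewrite /eqm -e -linearB; apply: Lt_ker.
  by rewrite linearB /= liftK subrr.
move=> [n <-]; rewrite mkLinE /hfun.
have e := eqm_pi hK (i_Uc (lift n)); rewrite /eqm in e.
rewrite -(subrK (i (lift n)) (val _)); apply: (smD Soc_sm); [exact: Lt_Soc | exact: i_Soc].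
Qed.


Definition pull (m : M) : L := epsilon (inhabits 0) (fun l => j l = m).
Lemma pullK m : Lt m -> j (pull m) = m.
Proof. by move=> h; apply: (epsilon_spec (inhabits 0) (fun l => j l = m)). Qed.
Lemma pull_lin r x y : Lt x -> Lt y -> pull (r *: x + y) = r *: pull x + pull y.
Proof.
move=> hx hy; apply: hj; rewrite j_lin !pullK //; exact: (proj2 Lt_sm).
Qed.
Lemma pull0 : pull 0 = 0.
Proof.
apply: hj; rewrite pullK; last exact: (sm0 Lt_sm).
by rewrite /j !linear0.
Qed.

Fixpoint phi (s : seq R) : M -> PW L s :=
  match s return M -> PW L s with
  | [::] => fun _ => 0
  | g :: s' => fun m => (pull (g *: m), phi s' m)
  end.

Lemma phi_lin s : (forall g, g \in s -> a g) -> lin_on Uc (phi s).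
Proof.
elim: s => [|g s IH] hs r x y hx hy /=.
  by rewrite scaler0 addr0.
have ag : a g by apply: hs; rewrite mem_head.
rewrite IH //; last by move=> g' h'; apply: hs; rewrite in_cons h' orbT.
have -> : g *: (r *: x + y) = r *: (g *: x) + g *: y.
  by rewrite scalerDr !scalerA mulrC.
rewrite pull_lin; [by [] | exact: (hx g ag) | exact: (hy g ag)].
Qed.

Lemma phi_Soc s m : Soc m -> (forall g, g \in s -> a g) -> phi s m = 0.
Proof.
move=> hm; elim: s => [//|g s IH] hs /=.
rewrite hm ?pull0 ?IH //; first by move=> g' h'; apply: hs; rewrite in_cons h' orbT.
by apply: hs; rewrite mem_head.
Qed.

Lemma phi_ker s m : Uc m -> (forall g, g \in s -> a g) -> phi s m = 0 ->
  forall g, g \in s -> g *: m = 0.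
Proof.
move=> hm; elim: s => [//|g s IH] hs /= e g'.
have ag : a g by apply: hs; rewrite mem_head.
case: e => e1 e2; rewrite in_cons => /orP [/eqP ->|h].
  by rewrite -(pullK (hm g ag)) e1 /j !linear0.
by apply: IH => // g'' h'; apply: hs; rewrite in_cons h' orbT.
Qed.

Variables (gs : seq R) (hgs1 : forall g, g \in gs -> a g) (hgs2 : forall x, a x -> spanL gs x).

Definition Gf (y : Y) : PW L gs := phi gs (val y).
Lemma Gf_lin : linear Gf.
Proof.
apply: (@lift_lin _ _ _ _ hY _ (phi gs)); first exact: phi_lin.
by move=> w hw; apply: phi_Soc.
Qed.
Definition GL := mkLin Gf_lin.

Lemma GL_inj : injective GL.
Proof.
move=> y y' e; apply/eqP; rewrite -subr_eq0; apply/eqP.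
have : GL (y - y') = 0 by rewrite linearB e subrr.
rewrite mkLinE /Gf => h0; apply/sq_eq0 => x ax.
apply: (span_ann _ (hgs2 ax)); apply: phi_ker => //; exact: U_val.
Qed.

Lemma Y_S1 : S1 Y.
Proof. by case: hS1 => hsub _ _; apply: (hsub _ _ GL GL_inj); apply: S1_PW. Qed.

Lemma K_S21 : ext_class S2 S1 K.
Proof.
exists N, Y, hL, FL; split => //; last exact: Y_S1.
split; [exact: hL_inj | exact: FL_surj | exact: FL_ker].
Qed.

Lemma M'_tor : a_torsion a M'.
Proof.
move=> q; have [n hn] := Htor (val q); exists n => s hs.
by rewrite -(piK hM' q) sqpiM_scale hn.
Qed.

Lemma M'_S12 : ext_class S1 S2 M'.
Proof.
apply: sub21 => //.
have hC : Ca_class a (ext_class S2 S1) M'.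
  have hs : forall q : M', exists m, piML m = q.
    by move=> q; exists (val q); rewrite mkLinE piK.
  exact: (hQ hs HCa).
apply: hC; first exact: M'_tor.
exists K, iotaL; split; [exact: iota_inj | exact: iota_char | exact: K_S21].
Qed.

Lemma M_S12 : ext_class S1 S2 M.
Proof.
apply/(proj1 (hE M)).
exists L, M', (mkLin j_lin), piML; split; last exact: M'_S12.
  split.
  - by move=> x y; rewrite !mkLinE; apply: hj.
  - by move=> q; exists (val q); rewrite mkLinE piK.
  - move=> m; rewrite !mkLinE (pi0W hM' I); split => [[l <-]|[l <-]]; by exists l.
exact: S1_S12.
Qed.

End Main.

Theorem proposition3p3 (R : comPzRingType) (a : R -> Prop) (S1 S2 : modclass R) :
  noetherian_ring R -> is_ideal a ->
  serre S1 -> iso_closed S2 -> contains_zero S2 ->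
  ext_closed (ext_class S1 S2) ->
  closed_quot (Ca_class a (ext_class S2 S1)) ->
  (forall M, Ca_class a (ext_class S2 S1) M -> Ca_class a (ext_class S1 S2) M) /\
  (satisfies_Ca a (ext_class S2 S1) -> satisfies_Ca a (ext_class S1 S2)).
Proof.
move=> hN ha hS1 _ hZ hE hQ.
have P1 : forall M, Ca_class a (ext_class S2 S1) M -> Ca_class a (ext_class S1 S2) M.
  move=> M HCa Htor [Ns [i [hi hichar [L [N [f0 [g0 [hex SL SN]]]]]]]].
  have [gs [hgs1 hgs2]] := gens hN ha.
  exact: (M_S12 hS1 hZ hE hQ HCa Htor hi hichar hex SL SN hgs1 hgs2).
by split => // h M; apply: P1; apply: h.
Qed.
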